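(* Let $M_0$ be a matroid on a finite set $E$ and let $\mathcal{C}_0$ be the family of all non-spanning circuits of $M_0$. Then the free elevation of $M_0$ is a maximal $\mathcal{C}_0$-matroid on $E$. That is, it is a $\mathcal{C}_0$-matroid, and no $\mathcal{C}_0$-matroid on $E$ is strictly larger in the weak order.
   Context: A $\mathcal{C}$-matroid on $E$ is a matroid on $E$ in which every member of $\mathcal{C}$ is a circuit. The weak order is defined by $M_1\preceq M_2$ if every independent set of $M_1$ is independent in $M_2$. $M$ is the truncation of $N$ if $r_N(E)=r_M(E)+1$ and $r_M(X)=\min\{r_N(X),r_M(E)\}$ for all $X$. An erection of $M$ is any such $N$, or $M$ itself (the trivial erection). The free erection is the maximum of the lattice of erections of $M$ under the weak order. The free elevation of $M_0$ is obtained by repeatedly taking non-trivial free erections until a matroid with no non-trivial erection is reached. *)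

(* Defs.v *)
(* A matroid on the finite ground set E = [set: T] (T a finType)
   is represented by its family of independent sets. *)
From mathcomp Require Import all_boot.
Set Implicit Arguments. Unset Strict Implicit. Unset Printing Implicit Defensive.

Section Matroids.
Variable T : finType.
Implicit Types (M N : {set {set T}}) (X Y C : {set T}).

Definition is_matroid M : Prop :=
  [/\ set0 \in M,
      (forall A B : {set T}, B \in M -> A \subset B -> A \in M) &
      (forall A B : {set T}, A \in M -> B \in M -> #|A| < #|B| ->
         exists2 x, x \in B :\: A & x |: A \in M)].

Definition rank M X : nat := \max_(Y in M | Y \subset X) #|Y|.

Definition circuit M C : bool :=
  (C \notin M) && [forall D : {set T}, (D \proper C) ==> (D \in M)].

Definition nonspanning_circuits M : {set {set T}} :=
  [set C | circuit M C && (rank M C < rank M [set: T])].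

Definition CC_matroid (CC : {set {set T}}) M : Prop :=
  is_matroid M /\ forall C, C \in CC -> circuit M C.

Definition weak_le M1 M2 : bool := M1 \subset M2.

Definition truncation_of M N : Prop :=
  rank N [set: T] = (rank M [set: T]).+1 /\
  forall X, rank M X = minn (rank N X) (rank M [set: T]).

Definition erection M N : Prop :=
  is_matroid N /\ (truncation_of M N \/ N = M).

Definition free_erection M N : Prop :=
  erection M N /\ forall N', erection M N' -> weak_le N' N.

Inductive free_elevation : {set {set T}} -> {set {set T}} -> Prop :=
| fel_stop M : is_matroid M -> (forall N, erection M N -> N = M) ->
    free_elevation M M
| fel_step M M1 N : free_erection M M1 -> M1 <> M -> free_elevation M1 N ->
    free_elevation M N.

End Matroids.

(* Main.v *)
Require Import Defs.
From mathcomp Require Import all_boot.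
From mathcomp Require Import zify.
Set Implicit Arguments. Unset Strict Implicit. Unset Printing Implicit Defensive.

Section Aux.
Variable T : finType.
Implicit Types (M N : {set {set T}}) (X Y C : {set T}).

Definition trunc k N : {set {set T}} := [set Y in N | #|Y| <= k].

Lemma rank_le_card M X : rank M X <= #|X|.
Proof. by apply/bigmax_leqP => Y /andP[_ s]; apply: subset_leq_card. Qed.

Lemma card_le_rank M X Y : Y \in M -> Y \subset X -> #|Y| <= rank M X.
Proof. by move=> YM sYX; rewrite /rank; apply: (bigmax_sup Y) => //; rewrite YM sYX. Qed.

Lemma rank_attained M X : set0 \in M ->
  exists2 Y, (Y \in M) && (Y \subset X) & #|Y| = rank M X.
Proof.
move=> s0.
have P0 : (set0 \in M) && (set0 \subset X) by rewrite s0 sub0set.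
rewrite /rank (bigmax_eq_arg set0 P0).
case: arg_maxnP => //= Y PY _; by exists Y.
Qed.

Lemma rank_mono M N X : M \subset N -> rank M X <= rank N X.
Proof.
move=> sMN; apply/bigmax_leqP => Y /andP[YM sYX].
apply: card_le_rank => //; exact: (subsetP sMN).
Qed.

Lemma indepE M X : set0 \in M -> (X \in M) <-> rank M X = #|X|.
Proof.
move=> s0; split.
  by move=> XM; apply/eqP; rewrite eqn_leq rank_le_card card_le_rank.
case: (rank_attained X s0) => Y /andP[YM sYX] <- cYX.
have: Y == X.
  by rewrite eqEcard sYX /= cYX.
by move/eqP <-.
Qed.

Lemma shrink k : forall n Y, #|Y| = n -> k <= n -> exists2 Z : {set T}, Z \subset Y & #|Z| = k.
Proof.
elim=> [|n IH] Y cY kn.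
  exists Y => //; lia.
case: (ltngtP k n.+1) kn => // [kn|->] _; last by exists Y.
have : 0 < #|Y| by lia.
case/card_gt0P => x xY.
have c' : #|Y :\ x| = n by move: (cardsD1 x Y); rewrite xY; lia.
case: (IH _ c') => [|Z sZ cZ]; first lia.
exists Z => //; apply: subset_trans sZ _; exact: subsetDl.
Qed.

Lemma trunc_matroid k N : is_matroid N -> is_matroid (trunc k N).
Proof.
case=> s0 dn ex; split.
- by rewrite inE s0 cards0.
- move=> A B; rewrite !inE => /andP[BN cB] sAB.
  rewrite (dn _ _ BN sAB) /=; apply: leq_trans cB; exact: subset_leq_card.
- move=> A B; rewrite !inE => /andP[AN cA] /andP[BN cB] lt.
  case: (ex _ _ AN BN lt) => x xBA xAN; exists x => //.
  rewrite inE xAN /=; move: xBA; rewrite inE => /andP[xA _].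
  rewrite cardsU1 xA /=; lia.
Qed.

Lemma rank_trunc k N X : is_matroid N -> rank (trunc k N) X = minn (rank N X) k.
Proof.
case=> s0 dn _; apply/eqP; rewrite eqn_leq; apply/andP; split.
  apply/bigmax_leqP => Y /andP[]; rewrite inE => /andP[YN cY] sYX.
  rewrite leq_min cY andbT; exact: card_le_rank.
case: (rank_attained X s0) => Y /andP[YN sYX] cY.
case: (shrink (k := minn (rank N X) k) (erefl #|Y|)) => [|Z sZY cZ]; first lia.
rewrite -cZ; apply: card_le_rank; last exact: subset_trans sZY sYX.
rewrite inE (dn _ _ YN sZY) cZ /=; lia.
Qed.

Lemma trunc_of_eq M M1 : is_matroid M -> is_matroid M1 -> truncation_of M M1 ->
  M = trunc (rank M [set: T]) M1.
Proof.
move=> [s0 _ _] [s1 _ _] [_ tr]; apply/setP => X; rewrite inE.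
apply/idP/idP.
  move/(indepE X s0); rewrite tr => h.
  have h1 := rank_le_card M1 X.
  have -> : X \in M1 by apply/(indepE X s1); lia.
  by apply/idP; lia.
case/andP => /(indepE X s1) h c; apply/(indepE X s0); rewrite tr; lia.
Qed.


Lemma sub_trunc M M1 : is_matroid M -> is_matroid M1 -> truncation_of M M1 ->
  M \subset M1.
Proof.
move=> hM hM1 tr; rewrite (trunc_of_eq hM hM1 tr).
by apply/subsetP => X; rewrite inE => /andP[].
Qed.

Lemma nsc_step M M1 C : is_matroid M -> is_matroid M1 -> truncation_of M M1 ->
  C \in nonspanning_circuits M -> C \in nonspanning_circuits M1.
Proof.
move=> hM hM1 tr; have sM := sub_trunc hM hM1 tr.
case: (hM) => s0 _ _; case: (hM1) => s1 _ _; case: (tr) => rE rX.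
rewrite !inE => /andP[/andP[CM /forallP allD] lt].
have h := rX C; have h1 := rank_le_card M1 C.
apply/andP; split; last by rewrite rE; lia.
apply/andP; split.
  apply/negP => /(indepE C s1) e; move/negP: CM; apply.
  apply/(indepE C s0); lia.
apply/forallP => D; apply/implyP => pD.
by move/implyP: (allD D) => /(_ pD) DM; apply: (subsetP sM).
Qed.

Lemma main_ind M FE : free_elevation M FE -> is_matroid M ->
  [/\ is_matroid FE, M \subset FE,
      (forall C, C \in nonspanning_circuits M -> C \in nonspanning_circuits FE) &
      forall N, is_matroid N -> FE \subset N -> trunc (rank M [set: T]) N = M -> N = FE].
Proof.
elim=> {M FE}.
- move=> M hM maxM _; split => // N hN sMN tN.
  set r := rank M [set: T].
  have rNr : r <= rank N [set: T] by apply: rank_mono.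
  case: (ltngtP r (rank N [set: T])) rNr => // [lt|eq] _.
    have hN' := trunc_matroid r.+1 hN.
    have er : erection M (trunc r.+1 N).
      split => //; left; split.
        rewrite rank_trunc //; lia.
      move=> X; have tX : rank M X = minn (rank N X) r by rewrite -{1}tN rank_trunc.
      rewrite rank_trunc // tX; lia.
    have := maxM _ er => e.
    have := rank_trunc r.+1 [set: T] hN; rewrite e -/r; lia.
  rewrite -tN; apply/setP => X; rewrite inE; apply/idP/idP => [XN|]; last by case/andP.
  rewrite XN /= -/r eq; exact: card_le_rank.
- move=> M M1 N [[hM1 [tr|//]] fmax] ne _ IH hM.
  case: (IH hM1) => hN sM1N nscN maxN.
  have sMM1 := sub_trunc hM hM1 tr.
  split => //.
  + exact: subset_trans sMM1 sM1N.
  + by move=> C /(nsc_step hM hM1 tr); apply: nscN.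
  move=> N' hN' sN tN; apply: maxN => //.
  set r := rank M [set: T].
  have rM1 : rank M1 [set: T] = r.+1 by case: tr.
  have r1N : r.+1 <= rank N' [set: T].
    rewrite -rM1; apply: rank_mono; exact: subset_trans sM1N sN.
  have hT := trunc_matroid r.+1 hN'.
  have er : erection M (trunc r.+1 N').
    split => //; left; split.
      rewrite rank_trunc //; lia.
    move=> X; have tX : rank M X = minn (rank N' X) r by rewrite -{1}tN rank_trunc.
    rewrite rank_trunc // tX; lia.
  have s1 : trunc r.+1 N' \subset M1 := fmax _ er.
  rewrite rM1; apply/eqP; rewrite eqEsubset s1 /=.
  apply/subsetP => X XM1; rewrite inE (subsetP (subset_trans sM1N sN) _ XM1) /=.
  rewrite -rM1; exact: card_le_rank.
Qed.


Lemma base_trunc M0 N : is_matroid M0 -> CC_matroid (nonspanning_circuits M0) N ->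
  M0 \subset N -> trunc (rank M0 [set: T]) N = M0.
Proof.
move=> hM0 [[s0N dnN _] circN] sMN; case: (hM0) => s0 dn _.
apply/setP => X; rewrite inE; apply/idP/idP; last first.
  move=> XM; rewrite (subsetP sMN _ XM) /=; exact: card_le_rank.
case/andP => XN cX; apply/negPn/negP => XM.
have PX : [pred D : {set T} | D \notin M0] X by [].
case: (minset_exists PX) => C /minsetP [CM minC] sCX.
have cC : circuit M0 C.
  apply/andP; split => //; apply/forallP => D; apply/implyP => pD.
  apply/negPn/negP => DM.
  have := minC D DM (proper_sub pD) => e.
  by move: pD; rewrite e properE subxx.
have rC : rank M0 C < rank M0 [set: T].
  have h1 := rank_le_card M0 C.
  have h2 : rank M0 C != #|C| by apply/eqP => /(indepE C s0) CM'; move/negP: CM.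
  have := subset_leq_card sCX; lia.
have : C \in nonspanning_circuits M0 by rewrite inE cC rC.
move/circN => /andP[CN _]; move/negP: CN; apply; exact: dnN XN sCX.
Qed.

End Aux.

Theorem lemma3p1 (T : finType) (M0 FE : {set {set T}}) :
  is_matroid M0 ->
  free_elevation M0 FE ->
  CC_matroid (nonspanning_circuits M0) FE /\
  (forall N : {set {set T}}, CC_matroid (nonspanning_circuits M0) N ->
     weak_le FE N -> N = FE).
Proof.
move=> hM0 fe; case: (main_ind fe hM0) => hFE sM nsc maxN.
split.
  split => // C /nsc; rewrite inE => /andP[].
  done.
move=> N hN sFE; apply: maxN => //; first by case: hN.
apply: base_trunc => //; exact: subset_trans sM sFE.
Qed.
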